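(* Consider the online instance reservation problem described in the context, with parameters $p>0$, $\alpha\in[0,1)$, $\tau\ge1$, and $\beta=1/(1-\alpha)$. The deterministic online algorithm $A_\beta$ is $(2-\alpha)$-competitive: for every $T$ and every demand sequence $\mathbf d=(d_1,\dots,d_T)$, $C_{A_\beta}(\mathbf d)\le (2-\alpha)\,C_{\mathrm{OPT}}(\mathbf d)$, where $C_{A_\beta}(\mathbf d)$ is the cost incurred by $A_\beta$ and $C_{\mathrm{OPT}}(\mathbf d)$ is the optimal offline cost.
   Context: Instance reservation problem: time is slotted $t=1,2,\dots,T$. At each time $t$ a demand $d_t\in\{0,1,2,\dots\}$ arrives; set $d_t=0$ for $t\le 0$. A user chooses integers $o_t\ge 0$ (on-demand instances used at $t$) and $r_t\ge 0$ (instances newly reserved at $t$; $r_t=0$ for $t\le 0$), subject to $o_t+\sum_{i=t-\tau+1}^{t} r_i\ge d_t$ for all $t$, where $\tau$ is the reservation period. The reservation fee is normalized to $1$, the on-demand rate is $p$ (the paper assumes throughout $p\ll 1$), and reserved instances run at rate $\alpha p$. The total cost is $C=\sum_{t=1}^T\big(o_t p + r_t + \alpha p(d_t-o_t)\big)$. $C_{\mathrm{OPT}}(\mathbf d)$ is the minimum of $C$ over all feasible integer $(o_t,r_t)$ given the whole sequence. An online algorithm chooses $o_t,r_t$ knowing only $d_1,\dots,d_t$. Algorithm $A_z$ (threshold $z\ge0$): maintain integers $x_i$, initially $x_i=0$ for all $i$. At each time $t$, upon arrival of $d_t$: while $p\cdot\big|\{i: t-\tau+1\le i\le t,\ d_i>x_i\}\big|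 > z$: increase $r_t$ by $1$; increase $x_i$ by $1$ for $i=t,\dots,t+\tau-1$; increase $x_i$ by $1$ for $i=t-\tau+1,\dots,t-1$. Then set $o_t=\max\{d_t-x_t,0\}$. $A_\beta$ is $A_z$ with $z=\beta$. *)

(* Defs.v *)
From HB Require Import structures.
From mathcomp Require Import all_boot all_order all_algebra.
Set Implicit Arguments. Unset Strict Implicit. Unset Printing Implicit Defensive.
Import Order.TTheory GRing.Theory Num.Theory.
Local Open Scope ring_scope.

(* Time slots are 1, 2, ..., T (natural numbers); a demand sequence is a
   function d : nat -> nat of which only d 1, ..., d T are ever used
   (slots t <= 0 carry no demand and no reservation). *)

Definition window (tau t : nat) : seq nat :=
  [seq i <- iota 1 t | (t < i + tau)%N].

(* o t = on-demand instances at t, r t = instances newly reserved at t. *)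
Definition feasible (tau T : nat) (d o r : nat -> nat) : Prop :=
  forall t : nat, (1 <= t <= T)%N ->
    (d t <= o t + \sum_(i <- window tau t) r i)%N.

Definition cost (R : realFieldType) (p alpha : R) (T : nat)
    (d o r : nat -> nat) : R :=
  \sum_(1 <= t < T.+1)
     ((o t)%:R * p + (r t)%:R + alpha * p * ((d t)%:R - (o t)%:R)).

Definition unmet (tau t : nat) (d x : nat -> nat) : nat :=
  count (fun i => (x i < d i)%N) (window tau t).

Definition bump (tau t : nat) (x : nat -> nat) : nat -> nat :=
  fun i => if (t < i + tau)%N && (i < t + tau)%N then (x i).+1 else x i.

(* The while loop at time t, run with a fuel bound; returns the final x and
   the number r_t of iterations (= reservations made at t). *)
Fixpoint reserve_loop (R : realFieldType) (p z : R) (tau t : nat)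
    (d : nat -> nat) (fuel : nat) (x : nat -> nat) : (nat -> nat) * nat :=
  match fuel with
  | 0%N => (x, 0%N)
  | fuel'.+1 =>
      if z < p * (unmet tau t d x)%:R then
        let: (x', k) := reserve_loop p z tau t d fuel' (bump tau t x) in
        (x', k.+1)
      else (x, 0%N)
  end.

(* The fuel suffices for z >= 0: after max_{i in window} d_i iterations no
   slot of the window is unmet any more, so the loop guard is false. *)
Definition loop_fuel (tau t : nat) (d : nat -> nat) : nat :=
  (\sum_(i <- window tau t) d i)%N.

Fixpoint Az_state (R : realFieldType) (p z : R) (tau : nat) (d : nat -> nat)
    (t : nat) : nat -> nat :=
  match t with
  | 0%N => fun _ => 0%N
  | t'.+1 => (reserve_loop p z tau t'.+1 d (loop_fuel tau t'.+1 d)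
                (Az_state p z tau d t')).1
  end.

Definition Az_r (R : realFieldType) (p z : R) (tau : nat) (d : nat -> nat)
    (t : nat) : nat :=
  (reserve_loop p z tau t d (loop_fuel tau t d) (Az_state p z tau d t.-1)).2.

(* o_t = max(d_t - x_t, 0) (truncated subtraction on nat) *)
Definition Az_o (R : realFieldType) (p z : R) (tau : nat) (d : nat -> nat)
    (t : nat) : nat :=
  (d t - Az_state p z tau d t t)%N.

Definition cost_Az (R : realFieldType) (p alpha z : R) (tau T : nat)
    (d : nat -> nat) : R :=
  cost p alpha T d (Az_o p z tau d) (Az_r p z tau d).

(* Main.v *)
Require Import Defs.
From HB Require Import structures.
From mathcomp Require Import all_boot all_order all_algebra.
From mathcomp Require Import zify ring lra.
Import Order.TTheory GRing.Theory Num.Theory.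
Local Open Scope ring_scope.
Set Implicit Arguments. Unset Strict Implicit. Unset Printing Implicit Defensive.

Section Loop.
Variables (R : realFieldType) (p z : R) (tau : nat) (d : nat -> nat).
Hypothesis tau_gt0 : (0 < tau)%N.
Hypothesis z_gt0 : 0 < z.
Hypothesis p_gt0 : 0 < p.

Definition bc (t i : nat) : nat := ((t < i + tau) && (i < t + tau))%N.

Definition addk (x : nat -> nat) (t k : nat) : nat -> nat := fun i => (x i + k * bc t i)%N.

Lemma reserve_loopE t fuel x i :
  (reserve_loop p z tau t d fuel x).1 i = (x i + (reserve_loop p z tau t d fuel x).2 * bc t i)%N.
Proof.
elim: fuel x => [|f IH] x /=; first by rewrite mul0n addn0.
case: ifP => _ //=; last by rewrite mul0n addn0.
have := IH (Defs.bump tau t x).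
case: (reserve_loop p z tau t d f (Defs.bump tau t x)) => xx k /= ->.
rewrite /Defs.bump /bc; case: ifP => _ /=; lia.
Qed.

Lemma unmet_ext t x y : (forall i, x i = y i) -> unmet tau t d x = unmet tau t d y.
Proof. by move=> h; rewrite /unmet; apply: eq_count => i; rewrite h. Qed.

Lemma mem_window t i : (i \in window tau t) = [&& (1 <= i)%N, (i <= t)%N & (t < i + tau)%N].
Proof.
rewrite /window mem_filter mem_iota; case: (t < i + tau)%N; rewrite ?andbT ?andbF //=.

Qed.

Lemma bc_window t i : i \in window tau t -> bc t i = 1%N.
Proof. rewrite mem_window /bc => /and3P [h1 h2 h3]; rewrite h3 /=; apply/eqP; rewrite eqb1; lia. Qed.

Lemma loop_guard_true t fuel x m :
  (m < (reserve_loop p z tau t d fuel x).2)%N -> z < p * (unmet tau t d (addk x t m))%:R.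
Proof.
elim: fuel x m => [|f IH] x m /=; first by [].
case: ifP => hg //=.
have := IH (Defs.bump tau t x).
case: (reserve_loop p z tau t d f (Defs.bump tau t x)) => xx k /= H.
case: m => [_|m]; first by rewrite (@unmet_ext t _ x) // => i; rewrite /addk mul0n addn0.
rewrite ltnS => /H; rewrite (@unmet_ext t _ (addk x t m.+1)) //.
move=> i; rewrite /addk /Defs.bump /bc; case: ifP => _ /=; lia.
Qed.

Lemma sum_bump_count (w : seq nat) t x :
  (forall i, i \in w -> bc t i = 1%N) ->
  (\sum_(i <- w) (d i - Defs.bump tau t x i) + count (fun i => x i < d i) w = \sum_(i <- w) (d i - x i))%N.
Proof.
elim: w => [|a w IH] h; first by rewrite !big_nil.
rewrite !big_cons /=.
have ha := h a (mem_head _ _).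
rewrite -IH; last by move=> i hi; apply: h; rewrite in_cons hi orbT.
move: ha; rewrite /Defs.bump /bc; case: ifP => _ //= _.
case: ltnP => hl /=; lia.
Qed.

Lemma loop_guard_false t fuel x :
  (\sum_(i <- window tau t) (d i - x i) <= fuel)%N ->
  ~~ (z < p * (unmet tau t d (addk x t (reserve_loop p z tau t d fuel x).2))%:R).
Proof.
elim: fuel x => [|f IH] x /=.
  move=> hs; have -> : unmet tau t d (addk x t 0) = 0%N.
    rewrite /unmet; apply/eqP; rewrite -leqn0 leqNgt -has_count; apply/hasPn => i hi.
    rewrite /addk mul0n addn0 -leqNgt.
    move: hs; rewrite leqn0 => /eqP hs.
    have : (d i - x i <= 0)%N by rewrite -hs (big_rem i hi) /= leq_addr.
    by rewrite leqn0 subn_eq0.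
  by rewrite mulr0 -leNgt ltW.
case: ifP => hg; last first.
  move=> _ /=; rewrite (@unmet_ext t _ x) ?hg // => i; by rewrite /addk mul0n addn0.
move=> hs.
have hpos : (0 < unmet tau t d x)%N.
  rewrite lt0n; apply/negP => /eqP h0; move: hg; rewrite h0 mulr0.
  by move/(lt_trans z_gt0); rewrite ltxx.
have := IH (Defs.bump tau t x).
case: (reserve_loop p z tau t d f (Defs.bump tau t x)) => xx k /= H.
have hs' : (\sum_(i <- window tau t) (d i - Defs.bump tau t x i) <= f)%N.
  have := sum_bump_count x (@bc_window t); rewrite /unmet in hpos; lia.
move: (H hs'); rewrite (@unmet_ext t (addk (Defs.bump tau t x) t k) (addk x t k.+1)) //.
move=> i; rewrite /addk /Defs.bump /bc; case: ifP => _ /=; lia.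
Qed.


Definition cs (f : nat -> nat) (a b : nat) : nat := (\sum_(a.+1 <= s < b.+1) f s)%N.

Lemma sum_cond_gt (f : nat -> nat) lo hi a :
  (lo <= a.+1 <= hi)%N ->
  (\sum_(lo <= i < hi | (a < i)%N) f i = \sum_(a.+1 <= i < hi) f i)%N.
Proof.
move=> /andP [h1 h2].
rewrite (@big_cat_nat _ _ _ a.+1 lo hi) //=.
rewrite big1_seq ?add0n; last by move=> i /andP [hai]; rewrite mem_index_iota; lia.
rewrite big_nat_cond [in RHS]big_nat_cond; apply: eq_bigl => i.
by rewrite andbT; case/boolP: (a < i < hi)%N => //= /andP [->].
Qed.

Lemma window_sum (f : nat -> nat) t : (\sum_(i <- window tau t) f i = cs f (t - tau) t)%N.
Proof.
rewrite /window big_filter /cs.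
have -> : iota 1 t = index_iota 1 t.+1 by rewrite /index_iota subn1.
have hc : (1 <= (t - tau).+1 <= t.+1)%N by rewrite !ltnS; apply/andP; split; lia.
rewrite -(sum_cond_gt f hc).
rewrite big_nat_cond [in RHS]big_nat_cond; apply: eq_bigl => i.
case/boolP: (1 <= i < t.+1)%N => //= /andP [h1 h2]; apply/idP/idP => h; lia.
Qed.

Lemma sum_bc (f : nat -> nat) t i :
  (t < i + tau)%N -> (i - tau <= t)%N -> (\sum_(1 <= s < t.+1) f s * bc s i = cs f (i - tau) t)%N.
Proof.
move=> ht hit.
have hc : (1 <= (i - tau).+1 <= t.+1)%N by rewrite !ltnS; apply/andP; split; lia.
rewrite /cs -(sum_cond_gt f hc).
rewrite [in RHS]big_mkcond /=; apply: eq_big_nat => s /andP [hs1 hs2].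
rewrite /bc; have -> : (s < i + tau)%N by lia.
have -> : (i < s + tau)%N = (i - tau < s)%N by apply/idP/idP => h; lia.
by case: (i - tau < s)%N; rewrite /= ?muln1 ?muln0.
Qed.

Lemma Az_stateE t i :
  Az_state p z tau d t i = (\sum_(1 <= s < t.+1) Az_r p z tau d s * bc s i)%N.
Proof.
elim: t => [|t IH]; first by rewrite big_geq.
rewrite big_nat_recr //= reserve_loopE IH; congr (_ + _)%N.
Qed.


Lemma cs_split (f : nat -> nat) a b c : (a <= b)%N -> (b <= c)%N -> cs f a c = (cs f a b + cs f b c)%N.
Proof. by move=> h1 h2; rewrite /cs (@big_cat_nat _ _ _ b.+1). Qed.

Lemma cs_nil (f : nat -> nat) a b : (b <= a)%N -> cs f a b = 0%N.
Proof. by move=> h; rewrite /cs big_geq. Qed.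

Lemma cs_S (f : nat -> nat) a b : (a <= b)%N -> cs f a b.+1 = (cs f a b + f b.+1)%N.
Proof. by move=> h; rewrite /cs big_nat_recr. Qed.

Lemma cs_mono (f : nat -> nat) a b c : (b <= c)%N -> (cs f a b <= cs f a c)%N.
Proof.
move=> h; case: (leqP a b) => hab.
  by rewrite (@cs_split f a b c) // leq_addr.
by rewrite (@cs_nil f a b) //; apply: ltnW.
Qed.

Lemma cs_monol (f : nat -> nat) a b c : (a <= b)%N -> (cs f b c <= cs f a c)%N.
Proof.
move=> h; case: (leqP b c) => hbc.
  by rewrite (@cs_split f a b c) // leq_addl.
by rewrite (@cs_nil f b c) //; apply: ltnW.
Qed.

Notation ar := (Az_r p z tau d).
Notation ast := (Az_state p z tau d).

Lemma state_window t i : (t < i + tau)%N -> (i - tau <= t)%N -> ast t i = cs ar (i - tau) t.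
Proof. by move=> h1 h2; rewrite Az_stateE sum_bc. Qed.

Lemma Az_oE t : Az_o p z tau d t = (d t - cs ar (t - tau) t)%N.
Proof. by rewrite /Az_o state_window //; lia. Qed.

Lemma Az_stateS t i : ast t.+1 i = addk (ast t) t.+1 (ar t.+1) i.
Proof. by rewrite /= reserve_loopE. Qed.

Lemma fuel_ok t x : (\sum_(i <- window tau t) (d i - x i) <= loop_fuel tau t d)%N.
Proof. by rewrite /loop_fuel; apply: leq_sum => i _; apply: leq_subr. Qed.

Lemma A_guard_true t m : (m < ar t.+1)%N -> z < p * (unmet tau t.+1 d (addk (ast t) t.+1 m))%:R.
Proof. exact: loop_guard_true. Qed.

Lemma A_guard_false t : ~~ (z < p * (unmet tau t.+1 d (ast t.+1))%:R).
Proof.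
rewrite (@unmet_ext t.+1 _ (addk (ast t) t.+1 (ar t.+1))); last exact: Az_stateS.
exact: loop_guard_false (fuel_ok _ _).
Qed.

Lemma unmet_addk t m :
  unmet tau t.+1 d (addk (ast t) t.+1 m) =
  count (fun i => (cs ar (i - tau) t + m < d i)%N) (window tau t.+1).
Proof.
rewrite /unmet; apply: eq_in_count => i hi.
have hb := bc_window hi; move: hi; rewrite mem_window => /and3P [h1 h2 h3].
by rewrite /addk hb muln1 state_window //; lia.
Qed.

Lemma unmet_state t :
  unmet tau t d (ast t) = count (fun i => (cs ar (i - tau) t < d i)%N) (window tau t).
Proof.
rewrite /unmet; apply: eq_in_count => i hi.
move: hi; rewrite mem_window => /and3P [h1 h2 h3].
by rewrite state_window //; lia.
Qed.


Definition alive (j t : nat) : bool := ((t < j + tau) && (cs ar (j - tau) t < d j))%N.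

Definition prevs (j : nat) : seq nat := [seq i <- iota 1 j.-1 | alive i j].

Definition mex (L : seq nat) : nat := find (fun c => c \notin L) (iota 0 (size L).+1).

Lemma mex_has L : has (fun c => c \notin L) (iota 0 (size L).+1).
Proof.
case: (boolP (has _ _)) => // /hasPn hall.
have hsub : {subset iota 0 (size L).+1 <= L}.
  by move=> c hc; have := hall c hc; rewrite negbK.
have := uniq_leq_size (iota_uniq 0 (size L).+1) hsub.
by rewrite size_iota ltnn.
Qed.

Lemma mex_le L : (mex L <= size L)%N.
Proof. by rewrite /mex -ltnS -[X in (_ < X)%N](size_iota 0) -has_find mex_has. Qed.

Lemma mex_notin L : mex L \notin L.
Proof.
have := nth_find 0 (mex_has L); rewrite nth_iota ?add0n //.
by rewrite ltnS mex_le.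
Qed.

Fixpoint colf (n : nat) : nat -> nat :=
  match n with
  | 0 => fun _ => 0%N
  | n'.+1 => fun i => if i == n'.+1 then mex (map (colf n') (prevs n'.+1)) else colf n' i
  end.

Definition col (j : nat) : nat := colf j j.

Lemma colfE n i : (i <= n)%N -> colf n i = col i.
Proof.
elim: n => [|n IH] hi; first by move: hi; rewrite leqn0 => /eqP ->.
rewrite /=; case: eqP => [->|hne]; first by rewrite /col /= eqxx.
by apply: IH; move: hi; rewrite leq_eqVlt => /orP [/eqP//|]; rewrite ltnS.
Qed.

Lemma colE j : col j.+1 = mex (map col (prevs j.+1)).
Proof.
rewrite {1}/col /= eqxx; congr mex; apply/eq_in_map => i.
rewrite mem_filter mem_iota => /andP [_ /andP [_ hi]].
by apply: colfE; move: hi; rewrite /= add1n ltnS.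
Qed.

Lemma col_prevs j i : i \in prevs j -> col i != col j.
Proof.
case: j => [|j]; first by rewrite /prevs /=.
move=> hi; rewrite colE; apply/eqP => heq.
by have := mex_notin (map col (prevs j.+1)); rewrite -heq map_f.
Qed.

Lemma count_alive_guard t : (0 < t)%N -> p * (count (alive^~ t) (iota 1 t))%:R <= z.
Proof.
case: t => [//|t] _.
have := A_guard_false t; rewrite -leNgt unmet_state /window count_filter.
by rewrite (@eq_count _ _ (alive^~ t.+1)) // => i; rewrite /alive /= andbC.
Qed.

Definition od (j : nat) : nat := Az_o p z tau d j.

Lemma od_alive j : (0 < od j)%N = alive j j.
Proof. by rewrite /od Az_oE /alive subn_gt0; have -> : (j < j + tau)%N by lia. Qed.

Lemma col_bound j : (0 < j)%N -> (0 < od j)%N -> ((col j).+1 <= count (alive^~ j) (iota 1 j))%N.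
Proof.
case: j => [//|j] _.
rewrite od_alive => ha.
have -> : iota 1 j.+1 = rcons (iota 1 j) j.+1.
  by have := iotaD 1 j 1; rewrite addn1 => ->; rewrite cats1 add1n.
rewrite -cats1 count_cat /= ha addn1 ltnS colE.
apply: leq_trans (mex_le _) _; rewrite size_map /prevs size_filter //.
Qed.


Lemma tele j j' : (0 < j)%N -> (j < j')%N -> (j' < j + tau)%N -> col j = col j' ->
  (od j <= cs ar j j')%N.
Proof.
move=> h0 h1 h2 hc.
have hna : ~~ alive j j'.
  apply/negP => ha; have : j \in prevs j'.
    by rewrite /prevs mem_filter ha mem_iota /=; apply/andP; split; lia.
  by move/col_prevs; rewrite hc eqxx.
move: hna; rewrite /alive h2 /= -leqNgt => hd.
rewrite /od Az_oE.
have := @cs_split ar (j - tau) j j' (leq_subr _ _) (ltnW h1); lia.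
Qed.

Definition odc (c j : nat) : nat := if col j == c then od j else 0%N.

Lemma cs_one (f : nat -> nat) a : cs f a a.+1 = f a.+1.
Proof. by rewrite /cs big_nat1. Qed.

Lemma chain_aux s c : (0 < s)%N -> (0 < od s)%N -> col s = c ->
  forall n, (n < tau)%N -> (n < s)%N ->
  exists m, [/\ (s - n <= m <= s)%N, col m = c &
    (cs (odc c) (s - n.+1) s + cs ar (s - tau) m <= d s)%N].
Proof.
move=> hs hod hc; elim => [|n IH] hn1 hn2.
  exists s; split; first by apply/andP; split; lia.
    by [].
  have -> : (s - 1 = s.-1)%N by lia.
  have := cs_one (odc c) s.-1; rewrite prednK // => ->.
  rewrite /odc hc eqxx; move: hod; rewrite /od Az_oE; lia.
have [m [/andP [hm1 hm2] hcm hm]] := IH (ltnW hn1) (ltnW hn2).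
set b := (s - n.+1)%N.
have hbdef : b = (s - n.+1)%N by [].
clearbody b.
have hsplit : cs (odc c) (s - n.+2) s = (odc c b + cs (odc c) b s)%N.
  have hb : b = (s - n.+2).+1 by lia.
  rewrite (@cs_split _ (s - n.+2) b s); [|lia|lia].
  by congr (_ + _)%N; rewrite {1}hb cs_one -hb.
case: (boolP (col b == c)) => hbc.
  exists b; split; first by apply/andP; split; lia.
    by apply/eqP.
  have ht := @tele b m ltac:(lia) ltac:(lia) ltac:(lia) ltac:(by rewrite (eqP hbc) hcm).
  have hs2 := @cs_split ar (s - tau) b m ltac:(lia) ltac:(lia).
  rewrite -hbdef in hm; rewrite hsplit; have -> : odc c b = od b by rewrite /odc hbc.
  lia.
exists m; split; first by apply/andP; split; lia.
  by [].
rewrite -hbdef in hm; rewrite hsplit; have -> : odc c b = 0%N by rewrite /odc (negbTE hbc).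
lia.
Qed.


Lemma chain s c : (0 < s)%N -> (0 < od s)%N -> col s = c -> (cs (odc c) (s - tau) s <= d s)%N.
Proof.
move=> hs hod hc.
have [m [_ _ hm]] := @chain_aux s c hs hod hc (minn tau s).-1 ltac:(lia) ltac:(lia).
have -> : (s - tau = s - (minn tau s).-1.+1)%N by lia.
lia.
Qed.

Definition oc (o : nat -> nat) (c j : nat) : nat := if col j == c then o j else 0%N.

Lemma color_claim (o r : nat -> nat) (T : nat) c :
  (forall t, (1 <= t <= T)%N -> (d t <= o t + cs r (t - tau) t)%N) ->
  forall t, (t <= T)%N -> (cs (odc c) 0 t <= cs (oc o c) 0 t + cs r 0 t)%N.
Proof.
move=> hfeas; elim/ltn_ind => t IH htT.
case: t IH htT => [|t] IH htT; first by rewrite cs_nil.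
case: (boolP ((col t.+1 == c) && (0 < od t.+1)%N)) => hct; last first.
  have h0 : odc c t.+1 = 0%N.
    by rewrite /odc; case: eqP hct => //= _; rewrite lt0n negbK => /eqP.
  rewrite cs_S // h0 addn0.
  apply: leq_trans (IH t (ltnSn t) (ltnW htT)) _.
  by apply: leq_add; apply: cs_mono.
move/andP: hct => [/eqP hc hod].
have hch := @chain t.+1 c (ltn0Sn t) hod hc.
have IH2 := IH (t.+1 - tau)%N ltac:(lia) ltac:(lia).
have hf := hfeas t.+1 ltac:(lia).
have e1 := @cs_split (odc c) 0 (t.+1 - tau) t.+1 (leq0n _) (leq_subr _ _).
have e2 := @cs_split r 0 (t.+1 - tau) t.+1 (leq0n _) (leq_subr _ _).
have e3 : (cs (oc o c) 0 (t.+1 - tau) + o t.+1 <= cs (oc o c) 0 t.+1)%N.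
  rewrite cs_S // /oc hc eqxx leq_add2r; apply: cs_mono; lia.
lia.
Qed.

Lemma sum_if_eq (N a : nat) (X : nat) :
  (\sum_(0 <= c < N) (if a == c then X else 0) = if (a < N)%N then X else 0)%N.
Proof.
elim: N => [|N IH]; first by rewrite big_geq.
rewrite big_nat_recr //= IH.
case: (ltngtP a N) => h.
- by rewrite ltnS (ltnW h) addn0.
- by rewrite ltnS leqNgt h.
- by rewrite h ltnSn add0n.
Qed.

Definition Ncol (T : nat) : nat := (\max_(0 <= t < T.+1) count (alive^~ t) (iota 1 t))%N.

Lemma Ncol_guard T : p * (Ncol T)%:R <= z.
Proof.
rewrite /Ncol; elim/big_ind: _ => //.
- by rewrite mulr0 ltW.
- by move=> a b ha hb; case: (leqP a b) => h; rewrite ?(maxn_idPr h) ?(maxn_idPl (ltnW h)).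
- move=> t _; case: t => [|t]; first by rewrite /= mulr0 ltW.
  exact: count_alive_guard.
Qed.

Lemma col_lt_N T j : (1 <= j <= T)%N -> (0 < od j)%N -> (col j < Ncol T)%N.
Proof.
move=> /andP [h1 h2] hod.
apply: leq_trans (col_bound h1 hod) _.
rewrite /Ncol; apply: (@leq_bigmax_seq _ _ _ (fun t => count (alive^~ t) (iota 1 t)) j) => //; rewrite mem_index_iota; lia.
Qed.

Lemma od_total (o r : nat -> nat) (T : nat) :
  (forall t, (1 <= t <= T)%N -> (d t <= o t + cs r (t - tau) t)%N) ->
  (cs od 0 T <= cs o 0 T + Ncol T * cs r 0 T)%N.
Proof.
move=> hfeas.
set N := Ncol T.
have e1 : cs od 0 T = (\sum_(0 <= c < N) cs (odc c) 0 T)%N.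
  rewrite /cs exchange_big_nat /=; apply: eq_big_nat => j /andP [hj1 hj2].
  rewrite /odc sum_if_eq; case: ifP => // hcN.
  case: (posnP (od j)) => // hod0.
  by move: (@col_lt_N T j ltac:(lia) hod0); rewrite /N hcN.
have e2 : (\sum_(0 <= c < N) cs (oc o c) 0 T <= cs o 0 T)%N.
  rewrite /cs exchange_big_nat /=; apply: leq_sum => j _.
  by rewrite /oc sum_if_eq; case: ifP.
rewrite e1; apply: (@leq_trans (\sum_(0 <= c < N) (cs (oc o c) 0 T + cs r 0 T))%N).
  by apply: leq_sum => c _; exact: color_claim hfeas _ (leqnn T).
rewrite big_split /= sum_nat_const_nat subn0; lia.
Qed.


Lemma count_in_le (T0 : eqType) (a b : pred T0) (s : seq T0) :
  (forall x, x \in s -> a x -> b x) -> (count a s <= count b s)%N.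
Proof.
elim: s => [//|y s IH] h /=; apply: leq_add; last first.
  by apply: IH => x hx; apply: h; rewrite in_cons hx orbT.
case: (boolP (a y)) => //= ha; by rewrite (h y (mem_head _ _) ha).
Qed.

Section X.
Variable r : nat -> nat.

Fixpoint Xst (t : nat) : nat -> nat :=
  match t with
  | 0 => fun _ => 0%N
  | t'.+1 => (reserve_loop p z tau t'.+1 d (loop_fuel tau t'.+1 d) (addk (Xst t') t'.+1 (r t'.+1))).1
  end.

Definition ex (t : nat) : nat :=
  (reserve_loop p z tau t d (loop_fuel tau t d) (addk (Xst t.-1) t (r t))).2.

Definition xr (t : nat) : nat := (r t + ex t)%N.

Lemma XstS t i : Xst t.+1 i = addk (addk (Xst t) t.+1 (r t.+1)) t.+1 (ex t.+1) i.
Proof. by rewrite /= reserve_loopE. Qed.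

Lemma XstE t i : Xst t i = (\sum_(1 <= s < t.+1) xr s * bc s i)%N.
Proof.
elim: t => [|t IH]; first by rewrite big_geq.
by rewrite XstS /addk IH [in RHS]big_nat_recr //= /xr; lia.
Qed.

Lemma Xst_window t i : (t < i + tau)%N -> (i - tau <= t)%N -> Xst t i = cs xr (i - tau) t.
Proof. by move=> h1 h2; rewrite XstE sum_bc. Qed.

Lemma X_guard_false t :
  p * (count (fun i => (cs xr (i - tau) t.+1 < d i)%N) (window tau t.+1))%:R <= z.
Proof.
rewrite leNgt.
have := loop_guard_false (fuel_ok t.+1 (addk (Xst t) t.+1 (r t.+1))).
rewrite -/(ex t.+1).
rewrite (@unmet_ext t.+1 _ (Xst t.+1)); last by move=> i; rewrite XstS.
rewrite /unmet; congr (~~ (_ < _ * _%:R)); apply: eq_in_count => i hi.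
by move: hi; rewrite mem_window => /and3P [h1 h2 h3]; rewrite Xst_window //; lia.
Qed.

Lemma X_guard_true t q : (q < ex t.+1)%N ->
  z < p * (count (fun i => (cs xr (i - tau) t + r t.+1 + q < d i)%N) (window tau t.+1))%:R.
Proof.
move=> hq; have := loop_guard_true hq.
rewrite /unmet; congr (_ < _ * _%:R); apply: eq_in_count => i hi.
have hb := bc_window hi.
by move: hi; rewrite mem_window => /and3P [h1 h2 h3]; rewrite /addk hb !muln1 Xst_window //; lia.
Qed.

Lemma A_le_X t : (cs ar 0 t <= cs xr 0 t)%N.
Proof.
elim/ltn_ind: t => t IH.
case: t IH => [|t] IH; first by rewrite cs_nil.
have IHt := IH t (ltnSn t).
have hxm : (cs xr 0 t <= cs xr 0 t.+1)%N by apply: cs_mono.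
rewrite cs_S //.
set M := (cs xr 0 t.+1 - cs ar 0 t)%N.
case: (leqP (ar t.+1) M) => hM; first by rewrite /M; lia.
have := A_guard_true hM; rewrite unmet_addk.
have hc : (count (fun i => (cs ar (i - tau) t + M < d i)%N) (window tau t.+1) <=
           count (fun i => (cs xr (i - tau) t.+1 < d i)%N) (window tau t.+1))%N.
  apply: count_in_le => i; rewrite mem_window => /and3P [h1 h2 h3] hlt.
  have IHi := IH (i - tau)%N ltac:(lia).
  have e1 := @cs_split ar 0 (i - tau) t (leq0n _) ltac:(lia).
  have e2 := @cs_split xr 0 (i - tau) t.+1 (leq0n _) ltac:(lia).
  rewrite /M in hlt; lia.
have hg := X_guard_false t.
move=> hlt; have : p * (count (fun i => (cs ar (i - tau) t + M < d i)%N) (window tau t.+1))%:R <= z.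
  apply: le_trans _ hg; apply: ler_wpM2l; first exact: ltW p_gt0.
  by rewrite ler_nat.
by rewrite leNgt hlt.
Qed.


Lemma count_sumE (T0 : Type) (a : pred T0) (s : seq T0) : count a s = (\sum_(x <- s) (a x : nat))%N.
Proof. by elim: s => [|y s IH]; rewrite ?big_nil ?big_cons //= IH. Qed.

Lemma sum_lt_min e b : (\sum_(q < e) (q < b)%N : nat)%N = minn e b.
Proof.
elim: e => [|e IH]; first by rewrite big_ord0 min0n.
rewrite big_ord_recr /= IH; case: (ltnP e b) => h /=; lia.
Qed.

Lemma cs_add (f g : nat -> nat) a b : cs (fun s => f s + g s)%N a b = (cs f a b + cs g a b)%N.
Proof. by rewrite /cs big_split. Qed.

Definition bud (i t : nat) : nat := (d i - cs r (i - tau) i - cs ex i.-1 t)%N.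
Definition Bpot (T t : nat) : nat := (\sum_(1 <= i < T.+1) bud i t)%N.

Definition nX (t q : nat) : nat :=
  count (fun i => (cs xr (i - tau) t + r t.+1 + q < d i)%N) (window tau t.+1).

Lemma ex_step T t : (t < T)%N -> (\sum_(q < ex t.+1) nX t q + Bpot T t.+1 <= Bpot T t)%N.
Proof.
move=> htT.
set e := ex t.+1.
have hmono : forall i, (bud i t.+1 <= bud i t)%N.
  by move=> i; rewrite /bud; apply: leq_sub2l; apply: cs_mono.
have hdiff : forall i, (1 <= i <= t.+1)%N -> (bud i t - bud i t.+1)%N = minn e (bud i t).
  move=> i hi; rewrite /bud cs_S; last by lia.
  rewrite -/e; lia.
have h1 : (\sum_(q < e) nX t q <= \sum_(i <- window tau t.+1) minn e (bud i t))%N.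
  rewrite /nX (eq_bigr _ (fun q _ => count_sumE _ _)) exchange_big /=.
  rewrite big_seq_cond [X in (_ <= X)%N]big_seq_cond; apply: leq_sum => i.
  rewrite andbT mem_window => /and3P [hi1 hi2 hi3].
  rewrite -sum_lt_min; apply: leq_sum => q _.
  case: ltnP => //= hq; rewrite lt0b.
  have ea := cs_add r ex (i - tau) t.
  have eb := @cs_mono r (i - tau) i t.+1 hi2.
  have ec := @cs_monol ex (i - tau) i.-1 t ltac:(lia).
  have ed := @cs_S r (i - tau) t ltac:(lia).
  move: hq; rewrite /bud /xr ea; lia.
have h2 : (\sum_(i <- window tau t.+1) minn e (bud i t) <= \sum_(1 <= i < T.+1) (bud i t - bud i t.+1))%N.
  rewrite /window big_filter.
  have -> : iota 1 t.+1 = index_iota 1 t.+2 by rewrite /index_iota subn1.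
  apply: leq_trans (_ : \sum_(1 <= i < t.+2) (bud i t - bud i t.+1) <= _)%N.
    rewrite big_mkcond /= big_nat_cond [X in (_ <= X)%N]big_nat_cond.
    apply: leq_sum => i /andP [/andP [hi1 hi2] _].
    case: ifP => _ //; rewrite hdiff //; lia.
  by rewrite [X in (_ <= X)%N](@big_cat_nat _ _ _ t.+2) //= ?leq_addr; lia.
have h3 : Bpot T t = (Bpot T t.+1 + \sum_(1 <= i < T.+1) (bud i t - bud i t.+1))%N.
  rewrite /Bpot sumnB; last by move=> i _; apply: hmono.
  rewrite subnKC //; apply: leq_sum => i _; apply: hmono.
rewrite h3 addnC leq_add2l; exact: leq_trans h1 h2.
Qed.

Lemma ex_total T : (\sum_(0 <= t < T) \sum_(q < ex t.+1) nX t q + Bpot T T <= Bpot T 0)%N.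
Proof.
have : forall n, (n <= T)%N -> (\sum_(0 <= t < n) \sum_(q < ex t.+1) nX t q + Bpot T n <= Bpot T 0)%N.
  elim => [|n IH] hn; first by rewrite big_geq.
  rewrite big_nat_recr //= -addnA.
  apply: leq_trans (IH (ltnW hn)); rewrite leq_add2l; exact: ex_step.
by apply.
Qed.

Lemma Bpot0 T : Bpot T 0 = (\sum_(1 <= i < T.+1) (d i - cs r (i - tau) i))%N.
Proof. by rewrite /Bpot; apply: eq_bigr => i _; rewrite /bud (@cs_nil ex i.-1 0) ?subn0. Qed.

Lemma ex_real_step t : z * (ex t.+1)%:R <= p * (\sum_(q < ex t.+1) nX t q)%:R.
Proof.
have h : forall q : 'I_(ex t.+1), z <= p * (nX t q)%:R.
  by move=> q; apply: ltW; exact: X_guard_true (ltn_ord q).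
have -> : z * (ex t.+1)%:R = \sum_(q < ex t.+1) z by rewrite sumr_const card_ord mulr_natr.
rewrite natr_sum mulr_sumr; apply: ler_sum => q _; exact: h.
Qed.

Lemma extras_bound T :
  z * (cs ex 0 T)%:R <= p * (\sum_(1 <= i < T.+1) (d i - cs r (i - tau) i))%:R.
Proof.
have hT := ex_total T.
rewrite -Bpot0.
apply: (@le_trans _ _ (p * (\sum_(0 <= t < T) \sum_(q < ex t.+1) nX t q)%:R)).
  rewrite /cs big_add1 /= natr_sum mulr_sumr natr_sum mulr_sumr.
  by apply: ler_sum => t _; apply: ex_real_step.
apply: ler_wpM2l; first exact: ltW p_gt0.
rewrite ler_nat; lia.
Qed.

End X.


Lemma feas_cs T o r : feasible tau T d o r ->
  forall t, (1 <= t <= T)%N -> (d t <= o t + cs r (t - tau) t)%N.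
Proof. by move=> hf t ht; rewrite -window_sum; apply: hf. Qed.

Lemma part1 T o r : feasible tau T d o r ->
  (cs ar 0 T)%:R <= (cs r 0 T)%:R + p / z * (cs o 0 T)%:R.
Proof.
move=> hf; have hf' := feas_cs hf.
have h1 := A_le_X r T.
have h2 := extras_bound r T.
have h3 : (\sum_(1 <= i < T.+1) (d i - cs r (i - tau) i) <= cs o 0 T)%N.
  rewrite /cs big_add1 /= [X in (_ <= X)%N]big_add1 /=.
  rewrite big_nat_cond [X in (_ <= X)%N]big_nat_cond.
  apply: leq_sum => i /andP [/andP [_ hi] _]; rewrite -/(cs r (i.+1 - tau) i.+1).
  have := hf' i.+1 ltac:(lia); lia.
have h4 : (cs (xr r) 0 T = cs r 0 T + cs (ex r) 0 T)%N by rewrite /xr cs_add.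
have h5 : (cs (ex r) 0 T)%:R <= p / z * (cs o 0 T)%:R :> R.
  rewrite mulrAC ler_pdivlMr // mulrC.
  apply: le_trans h2 _; apply: ler_wpM2l; first exact: ltW p_gt0.
  by rewrite ler_nat.
apply: le_trans (_ : (cs (xr r) 0 T)%:R <= _).
  by rewrite ler_nat.
by rewrite h4 natrD lerD2l.
Qed.

Lemma part2 T o r : feasible tau T d o r ->
  p / z * (cs od 0 T)%:R <= p / z * (cs o 0 T)%:R + (cs r 0 T)%:R.
Proof.
move=> hf; have hf' := feas_cs hf.
have h := od_total hf'.
have hN := Ncol_guard T.
have hpz : 0 <= p / z by apply: divr_ge0; apply: ltW.
apply: (@le_trans _ _ (p / z * ((cs o 0 T)%:R + (Ncol T)%:R * (cs r 0 T)%:R))).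
  by apply: ler_wpM2l => //; rewrite -natrM -natrD ler_nat.
rewrite mulrDr lerD2l mulrA.
have : p / z * (Ncol T)%:R <= 1.
  by rewrite mulrAC ler_pdivrMr // mul1r.
move=> hle; rewrite -[X in _ <= X]mul1r; apply: ler_wpM2r => //.
Qed.

End Loop.

Unset Implicit Arguments.
Set Strict Implicit.

Lemma cost_split (R : realFieldType) (p alpha : R) (T : nat) (d o r : nat -> nat) :
  cost p alpha T d o r =
  (cs r 0 T)%:R + p * (1 - alpha) * (cs o 0 T)%:R + alpha * p * (cs d 0 T)%:R.
Proof.
rewrite /cost /cs !natr_sum !mulr_sumr -!big_split /=.
by apply: eq_bigr => t _; ring.
Qed.

Theorem proposition1 (R : realFieldType) (p alpha : R) (tau T : nat)
    (d : nat -> nat) :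
  0 < p -> 0 <= alpha -> alpha < 1 -> (1 <= tau)%N ->
  forall o r : nat -> nat, feasible tau T d o r ->
  cost_Az p alpha (1 / (1 - alpha)) tau T d
    <= (2 - alpha) * cost p alpha T d o r.
Proof.
move=> hp ha0 ha1 htau o r hf.
set z := 1 / (1 - alpha).
have h1a : 0 < 1 - alpha by rewrite subr_gt0.
have hz : 0 < z by rewrite /z div1r invr_gt0.
have hpz : p / z = p * (1 - alpha) by rewrite /z div1r invrK.
have hfd : feasible tau T d d (fun _ => 0%N).
  by move=> t _; rewrite big1 ?addn0.
have e0 : cs (fun _ => 0%N) 0 T = 0%N by rewrite /cs big1.
have P1 := part1 htau hz hp hf.
have P2 := part2 htau hz hp hf.
have P1d := part1 htau hz hp hfd.
have P2d := part2 htau hz hp hfd.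
rewrite e0 hpz in P1d P2d; rewrite hpz in P1 P2.
rewrite /cost_Az !cost_split.
set A := (cs (Az_r p z tau d) 0 T)%:R in P1 P1d *.
set Od := (cs (Az_o p z tau d) 0 T)%:R.
have Q2 : p * (1 - alpha) * Od <= p * (1 - alpha) * (cs o 0 T)%:R + (cs r 0 T)%:R := P2.
have Q2d : p * (1 - alpha) * Od <= p * (1 - alpha) * (cs d 0 T)%:R + 0%:R := P2d.
set Rr := (cs r 0 T)%:R in P1 Q2 *.
set O := (cs o 0 T)%:R in P1 Q2 *.
set Dd := (cs d 0 T)%:R in P1d Q2d *.
rewrite ?mulr0n ?add0r ?addr0 in P1d Q2d.
set P := p * (1 - alpha) in P1 Q2 P1d Q2d *.
set C := Rr + P * O.
set E := A + P * Od.
have hE1 : E <= 2 * C by rewrite /E /C; lra.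
have hE2 : E <= 2 * (P * Dd) by rewrite /E; lra.
have k1 : 0 <= (2 - alpha) * (2 * C - E).
  by apply: mulr_ge0; rewrite subr_ge0 //; lra.
have k2 : 0 <= alpha * (2 * (P * Dd) - E).
  by apply: mulr_ge0 => //; rewrite subr_ge0.
rewrite -/E.
have : 0 <= 2 * ((2 - alpha) * (C + alpha * p * Dd) - (E + alpha * p * Dd)).
  have -> : 2 * ((2 - alpha) * (C + alpha * p * Dd) - (E + alpha * p * Dd)) =
    (2 - alpha) * (2 * C - E) + alpha * (2 * (P * Dd) - E).
    by rewrite /P; ring.
  by apply: addr_ge0.
by rewrite pmulr_rge0 ?subr_ge0 //; lra.
Qed.
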